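(* Let $n,k\in\mathbb{N}$ with $0\le k\le\lfloor (n+2)/2\rfloor$. Then there are poset isomorphisms $(\mathcal{A}_k(J([n]\times[2])),\le_k)\cong(\mathcal{A}_k(\mathcal{C}(n+2,2)),\le_k)\cong\mathcal{C}(n+2,2k)$.
   Context: $[n]=\{1,\dots,n\}$; $[n]\times[2]$ has the product order and $J(Q)$ is the poset of order ideals of $Q$ under inclusion. For $k\le m$, $\mathcal{C}(m,k)$ is the set of $k$-element subsets of $[m]$ written as increasing sequences $(x_1<\dots<x_k)$, with $\mathbf{x}\le\mathbf{y}$ iff $x_i\le y_i$ for all $i$. For a finite poset $P$, $\mathcal{A}_k(P)$ is the set of antichains of $P$ of size $k$; for $A,B\in\mathcal{A}_k(P)$, $A\prec_k B$ means $A\setminus B=\{a\}$, $B\setminus A=\{b\}$ are singletons with $a<_P b$, and $\le_k$ is the reflexive transitive closure of $\prec_k$. *)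

(* Defs.v *)
From mathcomp Require Import all_boot.
Set Implicit Arguments. Unset Strict Implicit. Unset Printing Implicit Defensive.

Definition poset_iso (T1 T2 : finType) (le1 : rel T1) (le2 : rel T2) : Prop :=
  exists f : T1 -> T2, bijective f /\ forall x y, le1 x y = le2 (f x) (f y).

Definition lt_of (T : finType) (le : rel T) : rel T :=
  fun x y => (x != y) && le x y.

Definition is_antichain (T : finType) (le : rel T) (k : nat) (A : {set T}) : bool :=
  (#|A| == k) && [forall x in A, forall y in A, (x != y) ==> ~~ le x y].

Definition Atype (T : finType) (le : rel T) (k : nat) :=
  {A : {set T} | is_antichain le k A}.

Definition covk (T : finType) (le : rel T) (k : nat) : rel (Atype le k) :=
  fun A B => [exists a : T, exists b : T,
     [&& val A :\: val B == [set a], val B :\: val A == [set b] & lt_of le a b]].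

Definition lek (T : finType) (le : rel T) (k : nat) : rel (Atype le k) :=
  connect (@covk T le k).

(* [n] is modelled as 'I_n (0-based shift, order-isomorphic). *)
Definition Qle (n : nat) : rel ('I_n * 'I_2) :=
  fun x y => (x.1 <= y.1)%N && (x.2 <= y.2)%N.

Definition is_ideal (n : nat) (I : {set 'I_n * 'I_2}) : bool :=
  [forall x, forall y, Qle x y ==> (y \in I) ==> (x \in I)].

Definition Jtype (n : nat) := {I : {set 'I_n * 'I_2} | is_ideal I}.

Definition Jle (n : nat) : rel (Jtype n) := fun I I' => val I \subset val I'.

(* k-element subsets of [m] (modelled as 'I_m), compared via their increasing
   enumerations x_1 < ... < x_k componentwise. *)
Definition Ctype (m k : nat) := {A : {set 'I_m} | #|A| == k}.

Definition sorted_elts (m : nat) (A : {set 'I_m}) : seq nat :=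
  sort leq [seq val x | x <- enum A].

Definition Cle (m k : nat) : rel (Ctype m k) :=
  fun A B => [forall i : 'I_k,
     nth 0 (sorted_elts (val A)) i <= nth 0 (sorted_elts (val B)) i].

(* Main.v *)
Require Import Defs.
From mathcomp Require Import all_boot.
From mathcomp Require Import zify.
Set Implicit Arguments. Unset Strict Implicit. Unset Printing Implicit Defensive.

Section SE.
Variable m : nat.
Implicit Types S T : {set 'I_m}.

Lemma sorted_elts_sorted S : sorted ltn (sorted_elts S).
Proof.
rewrite ltn_sorted_uniq_leq sort_uniq sort_sorted ?andbT; last exact: leq_total.
rewrite map_inj_uniq ?enum_uniq //; exact: val_inj.
Qed.

Lemma size_sorted_elts S : size (sorted_elts S) = #|S|.
Proof. by rewrite size_sort size_map cardE. Qed.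

Lemma mem_sorted_elts S (x : 'I_m) : (val x \in sorted_elts S) = (x \in S).
Proof. by rewrite /sorted_elts mem_sort (mem_map val_inj) mem_enum. Qed.

Lemma sorted_elts_lt S v : v \in sorted_elts S -> v < m.
Proof. by rewrite /sorted_elts mem_sort => /mapP[x _ ->]; exact: ltn_ord. Qed.

Lemma sorted_eltsE S s : sorted ltn s -> (forall x : 'I_m, (val x \in s) = (x \in S)) ->
  all (fun v => v < m) s -> sorted_elts S = s.
Proof.
move=> ss memS alls.
have us : uniq s by apply: sorted_uniq ss; [exact: ltn_trans | exact: ltnn].
have pe : perm_eq [seq val x | x <- enum S] s.
  apply: uniq_perm.
  - rewrite map_inj_uniq ?enum_uniq //; exact: val_inj.
  - exact: us.
  move=> v; apply/idP/idP.
  - by case/mapP => x; rewrite mem_enum => xS ->; rewrite memS.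
  - move=> vs; have vm : v < m by move/allP: alls => /(_ v vs).
    by apply/mapP; exists (Ordinal vm) => //; rewrite mem_enum -memS.
rewrite /sorted_elts (elimT (perm_sortP leq_total leq_trans anti_leq _ _) pe).
rewrite sorted_sort //; first exact: leq_trans.
by move: ss; rewrite ltn_sorted_uniq_leq => /andP[].
Qed.

Definition cnt (z : nat) S := \sum_(y in S) (z <= y).

Lemma cnt_count z S : cnt z S = count (leq z) (sorted_elts S).
Proof.
rewrite /cnt -big_enum /=.
have -> : \sum_(y <- enum S) (z <= y) = \sum_(v <- [seq val x | x <- enum S]) (z <= v).
  by rewrite big_map.
rewrite /sorted_elts.
rewrite (perm_big (sort leq [seq val x | x <- enum S])); last by rewrite perm_sym perm_sort.
elim: (sort _ _) => [|v s IH]; by rewrite ?big_nil ?big_cons //= IH.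
Qed.

End SE.

Lemma dom_seq (s t : seq nat) : sorted ltn s -> sorted ltn t -> size s = size t ->
  (forall i, i < size s -> nth 0 s i <= nth 0 t i) <-> (forall z, count (leq z) s <= count (leq z) t).
Proof.
move=> ss st sz.
have ss' : sorted leq s by move: ss; rewrite ltn_sorted_uniq_leq => /andP[].
have st' : sorted leq t by move: st; rewrite ltn_sorted_uniq_leq => /andP[].
have cE : forall (u : seq nat) z, count (leq z) u = count (fun i => z <= nth 0 u i) (iota 0 (size u)).
  by move=> u z; rewrite -[u in count _ u](mkseq_nth 0) /mkseq count_map.
split.
  move=> H z; rewrite !cE -sz; apply: sub_count => i /= zi.
  case: (ltnP i (size s)) => hi; first exact: leq_trans zi (H i hi).
  by move: zi; rewrite (nth_default 0 hi) leqn0 => /eqP ->.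
move=> H i hi; rewrite leqNgt; apply/negP => lt.
have := H (nth 0 s i); rewrite !cE -sz.
have e : size s = i.+1 + (size s - i.+1) by lia.
have e2 : size s = i + (size s - i) by lia.
have c1 : count (fun j => nth 0 s i <= nth 0 t j) (iota 0 (size s)) <= size s - i.+1.
  rewrite {1}e iotaD count_cat add0n.
  have -> : count (fun j => nth 0 s i <= nth 0 t j) (iota 0 i.+1) = 0.
    apply/eqP; rewrite -leqn0 leqNgt -has_count; apply/hasP => -[j]; rewrite mem_iota /= add0n => jl.
    apply/negP; rewrite -ltnNge; apply: leq_ltn_trans lt.
    apply: (sorted_leq_nth leq_trans leqnn 0 st'); rewrite ?inE; lia.
  by rewrite add0n; apply: leq_trans (count_size _ _) _; rewrite size_iota.
have c2 : size s - i <= count (fun j => nth 0 s i <= nth 0 s j) (iota 0 (size s)).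
  rewrite {2}e2 iotaD count_cat add0n.
  have -> : count (fun j => nth 0 s i <= nth 0 s j) (iota i (size s - i)) = size s - i.
    rewrite (eq_in_count (a2 := predT)) ?count_predT ?size_iota // => j; rewrite mem_iota => jl.
    apply: (sorted_leq_nth leq_trans leqnn 0 ss'); rewrite ?inE; lia.
  exact: leq_addl.
lia.
Qed.


Section Pairs.
Variable m : nat.
Notation P2 := (Ctype m 2).
Implicit Types P Q R : P2.

Definition lo P := nth 0 (sorted_elts (val P)) 0.
Definition hi P := nth 0 (sorted_elts (val P)) 1.

Lemma pairE P : sorted_elts (val P) = [:: lo P; hi P].
Proof.
have := size_sorted_elts (val P); rewrite (eqP (valP P)) /lo /hi.
by case: (sorted_elts _) => [|a [|b [|c s]]].
Qed.

Lemma lo_lt_hi P : lo P < hi P.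
Proof. by have := sorted_elts_sorted (val P); rewrite pairE /= andbT. Qed.

Lemma hi_lt P : hi P < m.
Proof. by apply: (@sorted_elts_lt _ (val P)); rewrite pairE !inE eqxx orbT. Qed.

Lemma lo_lt P : lo P < m.
Proof. exact: ltn_trans (lo_lt_hi P) (hi_lt P). Qed.

Definition loO P : 'I_m := Ordinal (lo_lt P).
Definition hiO P : 'I_m := Ordinal (hi_lt P).

Lemma mem_pair P (x : 'I_m) : (x \in val P) = (val x == lo P) || (val x == hi P).
Proof. by rewrite -mem_sorted_elts pairE !inE. Qed.

Lemma pair_set P : val P = [set loO P; hiO P].
Proof. by apply/setP => x; rewrite mem_pair !inE -!(inj_eq val_inj). Qed.

Lemma pair_ext P Q : lo P = lo Q -> hi P = hi Q -> P = Q.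
Proof. by move=> e1 e2; apply: val_inj; apply/setP => x; rewrite !mem_pair e1 e2. Qed.

Lemma Cle2 P Q : Cle P Q = (lo P <= lo Q) && (hi P <= hi Q).
Proof.
apply/forallP/andP => [H|[h1 h2] i].
  by split; [exact: (H ord0) | exact: (H ord_max)].
by case: i => -[|[|i]] //.
Qed.

Lemma mkpair_proof (a b : 'I_m) : a != b -> #|[set a; b]| == 2.
Proof. by move=> h; rewrite cards2 h. Qed.

Definition mkpair (a b : 'I_m) (h : a != b) : P2 := exist _ [set a; b] (mkpair_proof h).

Lemma mkpair_lohi (a b : 'I_m) (h : a != b) :
  lo (mkpair h) = minn a b /\ hi (mkpair h) = maxn a b.
Proof.
have : sorted_elts (val (mkpair h)) = [:: minn a b; maxn a b].
  have hv : val a != val b by [].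
  apply: sorted_eltsE.
  - rewrite /= andbT; case: (ltngtP a b) => ab; [lia | lia | by case/negP: h; apply/eqP/val_inj].
  - move=> x; rewrite /= !inE -!(inj_eq val_inj) /=.
    case: (ltngtP a b) => ab; [by [] | by rewrite orbC | by case/negP: h; apply/eqP/val_inj].
  - by rewrite /= andbT; apply/andP; split; [apply: leq_ltn_trans (geq_minl _ _) _ | rewrite gtn_max]; rewrite ?ltn_ord.
by rewrite pairE => -[-> ->].
Qed.

Lemma mkpair_val (a b : 'I_m) (h : a != b) : val (mkpair h) = [set a; b].
Proof. by []. Qed.

End Pairs.


Section Achain.
Variable m : nat.
Notation P2 := (Ctype m 2).
Implicit Types P Q R : P2.
Implicit Types A B : {set P2}.

Definition achain A := [forall x in A, forall y in A, (x != y) ==> ~~ (@Cle m 2) x y].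

Lemma achainP A : reflect (forall P Q, P \in A -> Q \in A -> P != Q -> ~~ Cle P Q) (achain A).
Proof.
apply: (iffP idP) => [H P Q PA QA PQ | H].
  by move/forall_inP/(_ P PA)/forall_inP/(_ Q QA)/implyP: H; apply.
apply/forall_inP => P PA; apply/forall_inP => Q QA; apply/implyP; exact: H.
Qed.

Lemma nest A P Q : achain A -> P \in A -> Q \in A -> P != Q ->
  (lo P < lo Q /\ hi Q < hi P) \/ (lo Q < lo P /\ hi P < hi Q).
Proof.
move=> /achainP H PA QA PQ.
have h1 := H _ _ PA QA PQ; have h2 : ~~ Cle Q P by apply: H; rewrite // eq_sym.
rewrite !Cle2 !negb_and -!ltnNge in h1 h2.
case/orP: h1 => h1; case/orP: h2 => h2; lia.
Qed.

Lemma achain_sub A B : B \subset A -> achain A -> achain B.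
Proof.
move=> sBA /achainP H; apply/achainP => P Q PB QB; apply: H; exact: (subsetP sBA).
Qed.

Lemma achainU1 A P : achain A -> (forall R, R \in A -> ~~ Cle P R && ~~ Cle R P) ->
  achain (P |: A).
Proof.
move=> hA H; apply/achainP => Q R; rewrite !in_setU1 => /predU1P[->|QA] /predU1P[->|RA] QR.
- by rewrite eqxx in QR.
- by case/andP: (H R RA).
- by case/andP: (H Q QA).
- exact: (achainP _ hA).
Qed.

Definition U A := \bigcup_(P in A) val P.

Lemma sub_U A P x : P \in A -> x \in val P -> x \in U A.
Proof. by move=> PA xP; apply/bigcupP; exists P. Qed.

Lemma loO_in P : loO P \in val P.
Proof. by rewrite mem_pair eqxx. Qed.
Lemma hiO_in P : hiO P \in val P.
Proof. by rewrite mem_pair eqxx orbT. Qed.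

Lemma disj A P Q x : achain A -> P \in A -> Q \in A -> P != Q -> x \in val P -> x \notin val Q.
Proof.
move=> hA PA QA PQ; have := nest hA PA QA PQ; have := lo_lt_hi P; have := lo_lt_hi Q.
rewrite !mem_pair => h1 h2 h3 /orP[/eqP e|/eqP e]; apply/negP => /orP[/eqP|/eqP]; lia.
Qed.

Lemma U_D1 A P : achain A -> P \in A -> U (A :\ P) = U A :\: val P.
Proof.
move=> hA PA; apply/setP => x; rewrite inE; apply/bigcupP/andP.
  case=> Q; rewrite in_setD1 => /andP[QP QA] xQ; split; last by apply/bigcupP; exists Q.
  exact: (disj hA QA PA QP xQ).
case=> xP /bigcupP[Q QA xQ]; exists Q => //; rewrite in_setD1 QA andbT.
by apply/eqP => e; move: xP; rewrite -e xQ.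
Qed.

Lemma U_U1 A P : U (P |: A) = val P :|: U A.
Proof.
apply/setP => x; rewrite inE; apply/bigcupP/orP.
  case=> Q; rewrite in_setU1 => /predU1P[->|QA] xQ; [by left | by right; apply/bigcupP; exists Q].
case=> [xP | /bigcupP[Q QA xQ]]; [exists P; rewrite ?setU11 // | exists Q; rewrite ?in_setU1 ?QA ?orbT //].
Qed.

Lemma U0 : U set0 = set0.
Proof. by rewrite /U big_set0. Qed.

Lemma U_split A P : achain A -> P \in A ->
  U A = val P :|: U (A :\ P) /\ val P :&: U (A :\ P) = set0.
Proof.
move=> hA PA; split; first by rewrite -U_U1 setD1K.
rewrite U_D1 //; apply/setP => x; rewrite !inE.
by case: (x \in val P); rewrite ?andbF.
Qed.

Lemma cardU A : achain A -> #|U A| = 2 * #|A|.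
Proof.
have [n cA] : exists n, #|A| = n by exists #|A|.
elim: n A cA => [|n IH] A cA hA.
  have -> : A = set0 by apply: cards0_eq.
  by rewrite U0 !cards0.
have : A != set0 by rewrite -card_gt0 cA.
case/set0Pn => P PA; have [-> e] := U_split hA PA.
have cD : #|A :\ P| = n by move: cA; rewrite (cardsD1 P) PA => -[].
rewrite cardsU e cards0 subn0 (eqP (valP P)) IH //; last exact: achain_sub (subsetDl _ _) hA.
by rewrite cA cD mulnS.
Qed.

Lemma widest A P0 : achain A -> P0 \in A ->
  exists2 P, P \in A & forall Q, Q \in A -> Q != P -> lo P < lo Q /\ hi Q < hi P.
Proof.
move=> hA P0A.
case: (@arg_maxnP _ P0 (fun P => P \in A) (fun P => hi P - lo P) P0A) => P PA Pmax.
exists P => // Q QA QP.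
have QP' : P != Q by rewrite eq_sym.
case: (nest hA PA QA QP') => [h|h] //.
have := Pmax Q QA; have := lo_lt_hi P; have := lo_lt_hi Q; lia.
Qed.

Lemma widest_bound A P x : P \in A ->
  (forall Q, Q \in A -> Q != P -> lo P < lo Q /\ hi Q < hi P) ->
  x \in U A -> lo P <= x <= hi P.
Proof.
move=> PA Pw /bigcupP[Q QA]; rewrite mem_pair => /orP[] /eqP e;
  apply/andP; have := lo_lt_hi P; have := lo_lt_hi Q;
  (case: (Q =P P) => [QP|/eqP QP]; [subst Q; simpl in e; lia | have := Pw Q QA QP; simpl in e; lia]).
Qed.

Lemma U_inj A B : achain A -> achain B -> U A = U B -> A = B.
Proof.
have [n cA] : exists n, #|A| = n by exists #|A|.
elim: n A B cA => [|n IH] A B cA hA hB eU.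
  have eA : A = set0 by apply: cards0_eq.
  rewrite eA U0 in eU *.
  apply/setP => Q; rewrite inE; apply/esym/negP => QB.
  by have := sub_U QB (loO_in Q); rewrite -eU inE.
have : A != set0 by rewrite -card_gt0 cA.
case/set0Pn => P0 P0A; have [P PA Pw] := widest hA P0A.
have : loO P \in U B by rewrite -eU; exact: sub_U PA (loO_in P).
case/bigcupP => Q0 Q0B _; have [P' P'B P'w] := widest hB Q0B.
have b1 := widest_bound P'B P'w; have b3 := widest_bound PA Pw.
have eP : P = P'.
  have i1 : loO P \in U B by rewrite -eU; exact: sub_U PA (loO_in P).
  have i2 : loO P' \in U A by rewrite eU; exact: sub_U P'B (loO_in P').
  have i3 : hiO P \in U B by rewrite -eU; exact: sub_U PA (hiO_in P).
  have i4 : hiO P' \in U A by rewrite eU; exact: sub_U P'B (hiO_in P').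
  have /andP[/= ? ?] := b1 _ i1; have /andP[/= ? ?] := b1 _ i3; have /andP[/= ? ?] := b3 _ i2; have /andP[/= ? ?] := b3 _ i4.
  have := lo_lt_hi P; have := lo_lt_hi P'.
  move=> *; apply: pair_ext; lia.
subst P'.
rewrite -(setD1K PA) -(setD1K P'B); congr (_ |: _); apply: IH.
- by move: cA; rewrite (cardsD1 P) PA => -[].
- exact: achain_sub (subsetDl _ _) hA.
- exact: achain_sub (subsetDl _ _) hB.
- by rewrite !U_D1 // eU.
Qed.

End Achain.


Section Surj.
Variable m : nat.
Notation P2 := (Ctype m 2).
Implicit Types P Q R : P2.
Implicit Types A B : {set P2}.

Lemma surjU k (S : {set 'I_m}) : #|S| = 2 * k ->
  exists A : {set P2}, [/\ achain A, #|A| = k & U A = S].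
Proof.
elim: k S => [|k IH] S cS.
  exists set0; split.
  - by apply/achainP => P Q; rewrite inE.
  - by rewrite cards0.
  - by rewrite U0; apply/esym/cards0_eq.
have : S != set0 by rewrite -card_gt0 cS.
case/set0Pn => x0 x0S.
case: (@arg_minnP _ x0 (fun x => x \in S) (fun x : 'I_m => val x) x0S) => a aS amin.
case: (@arg_maxnP _ x0 (fun x => x \in S) (fun x : 'I_m => val x) x0S) => b bS bmax.
have hab : a != b.
  apply/eqP => eab; subst b.
  have : S \subset [set a].
    apply/subsetP => x xS; rewrite inE; apply/eqP/val_inj; apply/eqP.
    by have := amin x xS; have := bmax x xS; simpl; lia.
  by move/subset_leq_card; rewrite cards1 cS; lia.
have ab : val a < val b.
  by have := amin b bS; move: hab; rewrite -(inj_eq val_inj) /=; lia.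
pose S' := S :\ a :\ b.
have cS' : #|S'| = 2 * k.
  rewrite /S'; have := cardsD1 a S; have := cardsD1 b (S :\ a).
  rewrite aS !inE eq_sym hab bS /=; move=> e1 e2; rewrite e1 in e2; rewrite e2 in cS; lia.
have [A' [hA' cA' UA']] := IH S' cS'.
have S'bd : forall x, x \in S' -> val a < val x < val b.
  move=> x; rewrite !inE => /and3P[xb xa xS].
  have := amin x xS; have := bmax x xS.
  move: xb xa; rewrite -!(inj_eq val_inj) /=; lia.
pose P := mkpair hab.
have [loP hiP] := mkpair_lohi hab.
have PA' : P \notin A'.
  apply/negP => PA'.
  have : a \in U A' by apply: (sub_U PA'); rewrite mkpair_val !inE eqxx.
  by rewrite UA' !inE eqxx andbF.
exists (P |: A'); split.
- apply: achainU1 => // R RA.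
  have i1 : loO R \in S' by rewrite -UA'; exact: sub_U RA (loO_in R).
  have i2 : hiO R \in S' by rewrite -UA'; exact: sub_U RA (hiO_in R).
  have l1 := S'bd _ i1; have l2 := S'bd _ i2.
  move: l1 l2; rewrite /= !Cle2 loP hiP; have := lo_lt_hi R.
  rewrite /minn /maxn ab; lia.
- by rewrite cardsU1 PA' cA'.
- rewrite U_U1 UA' mkpair_val; apply/setP => x; rewrite !inE.
  case: (x =P a) => [->|_]; rewrite ?aS //=.
  by case: (x =P b) => [->|_]; rewrite ?bS.
Qed.

End Surj.


Section Cnt.
Variable m : nat.
Notation P2 := (Ctype m 2).
Implicit Types P Q R : P2.
Implicit Types A B : {set P2}.
Implicit Types S T X Y : {set 'I_m}.

Lemma cntU z X Y : X :&: Y = set0 -> cnt z (X :|: Y) = cnt z X + cnt z Y.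
Proof.
move=> e; rewrite /cnt (big_setID X) /= setUK setDUl setDv set0U.
congr (_ + _); apply: eq_bigl => y; rewrite !inE.
case yX: (y \in X) => //=; case yY: (y \in Y) => //.
have H : y \in X :&: Y by rewrite inE yX yY.
by rewrite e inE in H.
Qed.

Lemma cnt_pair z P : cnt z (val P) = (z <= lo P) + (z <= hi P).
Proof. by rewrite cnt_count pairE /= addn0. Qed.

Lemma cnt_le_card z S : cnt z S <= #|S|.
Proof. by rewrite /cnt -sum1_card; apply: leq_sum => y _; case: (z <= y). Qed.

Lemma cnt_all z S : (forall y, y \in S -> z <= y) -> cnt z S = #|S|.
Proof. by move=> H; rewrite /cnt -sum1_card; apply: eq_bigr => y /H ->. Qed.

Lemma cnt_big z S : m <= z -> cnt z S = 0.
Proof.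
move=> hz; apply: big1 => y _; apply/eqP; rewrite eqb0 -ltnNge.
exact: leq_trans (ltn_ord y) hz.
Qed.

Lemma cnt_mono z1 z2 S : z1 <= z2 -> cnt z2 S <= cnt z1 S.
Proof.
move=> h; apply: leq_sum => y _; case: (leqP z2 y) => // h2.
by rewrite (leq_trans h h2).
Qed.

Lemma cnt_succ (x : 'I_m) S : cnt x S = (x \in S) + cnt x.+1 S.
Proof.
rewrite /cnt; case xS: (x \in S).
  rewrite (big_setD1 _ xS) [in RHS](big_setD1 _ xS) /= leqnn ltnn add1n add0n; congr (_.+1).
  apply: eq_bigr => y; rewrite !inE => /andP[yx _].
  move/negbTE: yx; rewrite -(inj_eq val_inj) /= => yx.
  by rewrite leq_eqVlt eq_sym yx.
rewrite add0n; apply: eq_bigr => y yS.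
have yx : (val y == val x) = false.
  by rewrite (inj_eq val_inj); apply/eqP => e; rewrite e xS in yS.
by rewrite leq_eqVlt eq_sym /= yx.
Qed.

Lemma cnt_move w S (x x' : 'I_m) : x \in S -> x' \notin S -> val x' = x.+1 ->
  cnt w (x' |: (S :\ x)) = cnt w S + (w == x.+1).
Proof.
move=> xS x'S ex.
have nx : x' \notin S :\ x by rewrite inE negb_and x'S orbT.
rewrite /cnt big_setU1 //= [in RHS](big_setD1 _ xS) /= ex.
rewrite leq_eqVlt ltnS; case: eqP => [->|_] /=; first by rewrite ltnn add0n addnC.
by rewrite addn0.
Qed.

Lemma cov_dom z A B a b : achain A -> achain B -> a \in A -> b \in B ->
  A :\ a = B :\ b -> Cle a b -> cnt z (U A) <= cnt z (U B).
Proof.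
move=> hA hB aA bB eAB; rewrite Cle2 => /andP[h1 h2].
have [eA dA] := U_split hA aA; have [eB dB] := U_split hB bB.
rewrite eA eB !cntU // !cnt_pair eAB leq_add2r.
apply: leq_add; case: leqP => // h; rewrite ?(leq_trans h) //; lia.
Qed.

End Cnt.


Lemma incomp_new (lp hp lr hr x y : nat) :
  lp < hp -> lr < hr ->
  ((lp = x /\ hp = y) \/ (lp = y /\ hp = x)) ->
  y != x.+1 -> lr != x.+1 -> hr != x.+1 ->
  ((lp < lr /\ hr < hp) \/ (lr < lp /\ hp < hr)) ->
  ~~ ((minn x.+1 y <= lr) && (maxn x.+1 y <= hr)) && ~~ ((lr <= minn x.+1 y) && (hr <= maxn x.+1 y)).
Proof.
move=> h1 h2 [[e1 e2]|[e1 e2]] h3 h4 h5; subst.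
- have -> : minn x.+1 y = x.+1 by apply/minn_idPl; lia.
  have -> : maxn x.+1 y = y by apply/maxn_idPr; lia.
  rewrite !negb_and -!ltnNge; move=> [[a b]|[a b]]; apply/andP; split; apply/orP; lia.
- have -> : minn x.+1 y = y by apply/minn_idPr; lia.
  have -> : maxn x.+1 y = x.+1 by apply/maxn_idPl; lia.
  rewrite !negb_and -!ltnNge; move=> [[a b]|[a b]]; apply/andP; split; apply/orP; lia.
Qed.

Section Step.
Variable m : nat.
Notation P2 := (Ctype m 2).
Implicit Types P Q R : P2.
Implicit Types A B : {set P2}.

Lemma step A (x x' : 'I_m) : achain A -> x \in U A -> x' \notin U A -> val x' = x.+1 ->
  exists A', [/\ achain A', #|A'| = #|A|, U A' = x' |: (U A :\ x) &
    [exists P, exists P', [&& A :\: A' == [set P], A' :\: A == [set P'] & lt_of (@Cle m 2) P P']]].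
Proof.
move=> hA /bigcupP[P PA xP] x'S ex'.
have [y [yx ePxy]] : exists y, y != x /\ val P = [set x; y].
  move: xP; rewrite pair_set !inE => /orP[] /eqP ->.
  - exists (hiO P); split => //; rewrite -(inj_eq val_inj) /=; have := lo_lt_hi P; lia.
  - exists (loO P); split; last by rewrite setUC.
    rewrite -(inj_eq val_inj) /=; have := lo_lt_hi P; lia.
have yS : y \in U A by apply: (sub_U PA); rewrite ePxy !inE eqxx orbT.
have xS : x \in U A by apply: (sub_U PA); rewrite ePxy !inE eqxx.
have hxy : x' != y by apply/eqP => e; rewrite e yS in x'S.
have lohiP : (lo P = x /\ hi P = y) \/ (lo P = y /\ hi P = x).
  have := mem_pair P x; have := mem_pair P y; rewrite ePxy !inE !eqxx orbT /=.
  move=> /esym /orP[] /eqP h1 /esym /orP[] /eqP h2; move: yx; rewrite -(inj_eq val_inj) /=;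
  have := lo_lt_hi P; lia.
pose P' := mkpair hxy.
have [loP' hiP'] := mkpair_lohi hxy.
have yx' : val y != x.+1 by rewrite -ex' eq_sym (inj_eq val_inj).
have P'A : P' \notin A.
  apply/negP => P'A; have : x' \in U A by apply: (sub_U P'A); rewrite mkpair_val !inE eqxx.
  by rewrite (negbTE x'S).
have PP' : P != P' by apply/eqP => e; rewrite -e PA in P'A.
exists (P' |: (A :\ P)); split.
- apply: achainU1; first exact: achain_sub (subsetDl _ _) hA.
  move=> R; rewrite !inE => /andP[RP RA].
  have RP' : P != R by rewrite eq_sym.
  have nR := nest hA PA RA RP'.
  have l1 : val (loO R) != x.+1.
    by rewrite -ex' (inj_eq val_inj); apply/eqP => e; move: x'S; rewrite -e (sub_U RA (loO_in R)).
  have l2 : val (hiO R) != x.+1.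
    by rewrite -ex' (inj_eq val_inj); apply/eqP => e; move: x'S; rewrite -e (sub_U RA (hiO_in R)).
  move: l1 l2 yx'; rewrite /= !Cle2 loP' hiP' ex' /= => l1 l2 yx2.
  exact: (incomp_new (lo_lt_hi P) (lo_lt_hi R) lohiP yx2 l1 l2 nR).
- by rewrite cardsU1 !inE negb_and P'A orbT [in RHS](cardsD1 P) PA.
- rewrite U_U1 U_D1 // mkpair_val ePxy; apply/setP => z; rewrite !inE.
  case: (z =P x') => [->|zx'] //=.
  case: (z =P y) => [->|zy] /=; first by rewrite yx yS.
  by case: (z =P x).
- apply/existsP; exists P; apply/existsP; exists P'; apply/and3P; split.
  + apply/eqP/setP => Q; rewrite !inE.
    case: (Q =P P) => [->|/eqP QP]; first by rewrite PA /= (negbTE PP').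
    by case: (Q \in A); rewrite /= ?orbT ?andbF.
  + apply/eqP/setP => Q; rewrite !inE.
    case: (Q =P P') => [->|/eqP QP']; first by rewrite (negbTE P'A).
    by case: (Q \in A); rewrite ?andbF.
  + rewrite /lt_of PP' /= Cle2 loP' hiP' ex' /= leq_min leq_max; have := lo_lt_hi P.
    case: lohiP => -[-> ->] h; rewrite ?leqnn ?leqnSn ?orbT ?andbT /=; [exact: ltnW h | exact: leq_trans (ltnW h) (leqnSn _)].
Qed.

End Step.


Lemma Cle_dom m j (S T : Ctype m j) :
  Cle S T <-> forall z, cnt z (val S) <= cnt z (val T).
Proof.
have sS : size (sorted_elts (val S)) = j by rewrite size_sorted_elts (eqP (valP S)).
have sT : size (sorted_elts (val T)) = j by rewrite size_sorted_elts (eqP (valP T)).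
have D := dom_seq (sorted_elts_sorted (val S)) (sorted_elts_sorted (val T)) (etrans sS (esym sT)).
split.
  move/forallP => H z; rewrite !cnt_count; apply D.1 => i; rewrite sS => hi.
  exact: (H (Ordinal hi)).
move=> H; apply/forallP => i; apply: D.2; last by rewrite sS.
by move=> z; rewrite -!cnt_count.
Qed.

Lemma cnt_eq_set m (S T : {set 'I_m}) : (forall z, z < m -> cnt z S = cnt z T) -> S = T.
Proof.
move=> H; apply/setP => x.
have := cnt_succ x S; have := cnt_succ x T.
have e2 : cnt x.+1 S = cnt x.+1 T.
  by case: (ltnP x.+1 m) => h; [apply: H | rewrite !cnt_big].
rewrite (H x (ltn_ord x)) e2 => ->; move/eqP; rewrite eqn_add2r.
by case: (x \in S); case: (x \in T).
Qed.

Lemma inj_surj_bij (T1 : finType) (T2 : eqType) (f : T1 -> T2) :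
  injective f -> (forall y, exists x, f x = y) -> bijective f.
Proof.
move=> fi fs.
have fs' : forall y, exists x, f x == y by move=> y; case: (fs y) => x e; exists x; rewrite e.
exists (fun y => xchoose (fs' y)).
  by move=> x; apply: fi; apply/eqP; exact: (xchooseP (fs' (f x))).
by move=> y; apply/eqP; exact: (xchooseP (fs' y)).
Qed.

Section Main.
Variables m k : nat.
Notation AT := (Atype (@Cle m 2) k).

Lemma AT_achain (A : AT) : achain (val A).
Proof. by case/andP: (valP A). Qed.

Lemma AT_card (A : AT) : #|val A| = k.
Proof. by case/andP: (valP A) => /eqP. Qed.

Lemma Psi_proof (A : AT) : #|U (val A)| == 2 * k.
Proof. by rewrite cardU ?AT_achain // AT_card. Qed.

Definition Psi (A : AT) : Ctype m (2 * k) := exist _ (U (val A)) (Psi_proof A).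

Lemma covk_dom (A B : AT) : covk A B -> forall z, cnt z (U (val A)) <= cnt z (U (val B)).
Proof.
case/existsP => a /existsP [b /and3P [e1 e2 /andP [_ lab]]] z.
have f1 : forall Q, (Q \notin val B) && (Q \in val A) = (Q == a).
  by move=> Q; move/eqP/setP: e1 => /(_ Q); rewrite !inE.
have f2 : forall Q, (Q \notin val A) && (Q \in val B) = (Q == b).
  by move=> Q; move/eqP/setP: e2 => /(_ Q); rewrite !inE.
have aA : a \in val A by have := f1 a; rewrite eqxx => /andP[].
have bB : b \in val B by have := f2 b; rewrite eqxx => /andP[].
apply: (cov_dom _ (AT_achain A) (AT_achain B) aA bB) lab.
apply/setP => Q; rewrite !inE -(f1 Q) -(f2 Q).
by case: (Q \in val A); case: (Q \in val B).
Qed.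

Lemma lek_dom (A B : AT) : lek A B -> forall z, cnt z (U (val A)) <= cnt z (U (val B)).
Proof.
rewrite /lek => /connectP [p pth ->]; elim: p A pth => [|C p IH] A //= /andP[cAC pth] z.
exact: leq_trans (covk_dom cAC z) (IH C pth z).
Qed.

Definition M (S : {set 'I_m}) := \sum_(z < m) cnt z S.

Lemma dom_lek (A B : AT) : (forall z, cnt z (U (val A)) <= cnt z (U (val B))) -> lek A B.
Proof.
move=> hd0.
suff H : forall N (A : AT), M (U (val B)) - M (U (val A)) < N ->
  (forall z, cnt z (U (val A)) <= cnt z (U (val B))) -> lek A B.
  exact: (H _ A (ltnSn _) hd0).
clear hd0; elim=> [//|N IH] {}A hN hd.
set SA := U (val A); set SB := U (val B).
case: (SA =P SB) => [eU|neU].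
  have -> : A = B by apply: val_inj; exact: U_inj (AT_achain A) (AT_achain B) eU.
  exact: connect0.
have [z0 hz0] : exists z, cnt z SA < cnt z SB.
  case: (boolP [exists z : 'I_m, cnt z SA < cnt z SB]) => [/existsP[z hz]|hn]; first by exists z.
  case: neU; apply: cnt_eq_set => z zm; apply/eqP; rewrite eqn_leq hd /= leqNgt.
  by apply/negP => hz; case/existsP: hn; exists (Ordinal zm).
have exP : exists z, cnt z SA < cnt z SB by exists z0.
have ubP : forall z, cnt z SA < cnt z SB -> z <= m.
  move=> z; case: (ltnP z m) => [/ltnW //|h]; by rewrite !cnt_big.
case: (ex_maxnP exP ubP) => z hz zmax.
have zm : z < m by case: (ltnP z m) => // h; move: hz; rewrite !cnt_big.
pose x0 : 'I_m := Ordinal zm.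
have x0S : x0 \notin SA.
  have e : cnt z.+1 SA = cnt z.+1 SB.
    apply/eqP; rewrite eqn_leq hd /= leqNgt; apply/negP => h.
    by have := zmax _ h; rewrite ltnn.
  move: hz; rewrite (cnt_succ x0 SA) (cnt_succ x0 SB) /= e ltn_add2r.
  by case: (x0 \in SA); case: (x0 \in SB).
have cardAB : #|SA| = #|SB| by rewrite (eqP (Psi_proof A)) (eqP (Psi_proof B)).
have [y0 y0S] : exists y, (y \in SA) && (y < z).
  case: (boolP [exists y, (y \in SA) && (y < z)]) => [/existsP //|hn].
  have : cnt z SA = #|SA|.
    apply: cnt_all => y yS; rewrite leqNgt; apply/negP => yz.
    by case/existsP: hn; exists y; rewrite yS yz.
  move=> e2; move: hz; rewrite e2 cardAB => h.
  by have := cnt_le_card z SB; rewrite leqNgt h.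
case: (@arg_maxnP _ y0 (fun y => (y \in SA) && (y < z)) (fun y : 'I_m => val y) y0S)
  => x /andP [xS xz] xmax.
have x1m : x.+1 < m by exact: leq_ltn_trans xz zm.
pose x' : 'I_m := Ordinal x1m.
have x'S : x' \notin SA.
  case: (ltngtP x.+1 z) => h.
  - apply/negP => x'S; have := xmax x'; rewrite x'S h /= => /(_ isT).
    by rewrite ltnn.
  - by have := leq_trans h xz; rewrite ltnn.
  - by rewrite (_ : x' = x0) //; apply: val_inj.
have ex' : val x' = x.+1 by [].
have [A' [hA' cA' UA' cov]] := step (AT_achain A) xS x'S ex'.
have cA'' : is_antichain (@Cle m 2) k A' by apply/andP; split; [rewrite cA' AT_card | exact: hA'].
have cA3 := cA''.
pose A2 : AT := exist _ A' cA''.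
have cnt2 : forall w, cnt w (U (val A2)) = cnt w SA + (w == x.+1).
  by move=> w; rewrite /= UA'; exact: cnt_move.
have hd2 : forall w, cnt w (U (val A2)) <= cnt w SB.
  move=> w; rewrite cnt2; case: eqP => [->|_]; last by rewrite addn0 hd.
  have h1 : cnt x.+1 SA = cnt z SA.
    apply: eq_bigr => y yS; case: (leqP z y) => zy; first by rewrite (leq_trans xz zy).
    have := xmax y; rewrite yS zy /= => /(_ isT) yx.
    by rewrite ltnNge yx.
  have h2 : cnt z SB <= cnt x.+1 SB by apply: cnt_mono.
  rewrite addn1 h1; exact: leq_trans hz h2.
have MA2 : M (U (val A2)) = (M SA).+1.
  rewrite /M; under eq_bigr => w _ do rewrite cnt2.
  rewrite big_split /= -[in RHS]addn1; congr (_ + _).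
  rewrite (bigD1 x') //= eqxx big1 // => w wx.
  by rewrite -ex' (inj_eq val_inj) (negbTE wx).
have MB : M (U (val A2)) <= M SB by apply: leq_sum => w _; exact: hd2.
apply: connect_trans (connect1 _) (IH A2 _ hd2); first exact: cov.
move: hN MB; rewrite MA2 /SA /SB; lia.
Qed.

Lemma Psi_lek (A B : AT) : lek A B = Cle (Psi A) (Psi B).
Proof.
apply/idP/idP.
  by move/lek_dom => h; apply/Cle_dom.
by move/Cle_dom; exact: dom_lek.
Qed.

Lemma Psi_bij : bijective Psi.
Proof.
apply: inj_surj_bij.
  move=> A B /(congr1 val) /= e; apply: val_inj.
  exact: U_inj (AT_achain A) (AT_achain B) e.
move=> S; have [A [hA cA UA]] := surjU (eqP (valP S)).
have hA' : is_antichain (@Cle m 2) k A by apply/andP; split; [rewrite cA | exact: hA].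
by exists (exist _ A hA'); apply: val_inj.
Qed.

Lemma part2 : poset_iso (@lek _ (@Cle m 2) k) (@Cle m (2 * k)).
Proof. exists Psi; split; [exact: Psi_bij | exact: Psi_lek]. Qed.

End Main.


Lemma connect_bij (T1 T2 : finType) (e1 : rel T1) (e2 : rel T2) (F : T1 -> T2) :
  bijective F -> (forall x y, e1 x y = e2 (F x) (F y)) ->
  forall x y, connect e1 x y = connect e2 (F x) (F y).
Proof.
case=> G FG GF eF x y; apply/idP/idP.
  move/connectP => [p pth ->]; apply/connectP; exists (map F p); last by rewrite last_map.
  by elim: p x pth => //= z p IH x /andP[h pth]; rewrite -eF h IH.
move/connectP => [p pth e]; apply/connectP; exists (map G p).
  elim: p x pth {e} => //= z p IH x /andP[h pth]; rewrite eF GF h /=.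
  by apply: IH; rewrite GF.
by rewrite -(FG y) e -[in RHS](FG x) last_map.
Qed.

Lemma img_anti (T1 T2 : finType) (le1 : rel T1) (le2 : rel T2) (f : T1 -> T2) k (A : {set T1}) :
  injective f -> (forall x y, le1 x y = le2 (f x) (f y)) ->
  is_antichain le1 k A -> is_antichain le2 k (f @: A).
Proof.
move=> fi fle /andP[cA hA]; apply/andP; split; first by rewrite card_imset.
apply/forall_inP => u /imsetP[x xA ->]; apply/forall_inP => v /imsetP[y yA ->].
apply/implyP => ne; rewrite -fle.
move/forall_inP/(_ x xA)/forall_inP/(_ y yA)/implyP: hA; apply.
by apply: contra ne => /eqP ->.
Qed.

Lemma transfer (T1 T2 : finType) (le1 : rel T1) (le2 : rel T2) k :
  poset_iso le1 le2 -> poset_iso (@lek _ le1 k) (@lek _ le2 k).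
Proof.
case=> f [fb fle].
have fi : injective f := bij_inj fb.
case: (fb) => g fg gf.
have gi : injective g := can_inj gf.
have gle : forall u v, le2 u v = le1 (g u) (g v) by move=> u v; rewrite fle !gf.
pose F (A : Atype le1 k) : Atype le2 k := exist _ (f @: val A) (img_anti fi fle (valP A)).
pose G (B : Atype le2 k) : Atype le1 k := exist _ (g @: val B) (img_anti gi gle (valP B)).
have FG : cancel F G.
  move=> A; apply: val_inj => /=; rewrite -imset_comp (eq_imset _ fg); exact: imset_id.
have GF : cancel G F.
  move=> B; apply: val_inj => /=; rewrite -imset_comp (eq_imset _ gf); exact: imset_id.
have Fb : bijective F by exists G.
have imD : forall X1 Y1 : {set T1}, f @: (X1 :\: Y1) = f @: X1 :\: f @: Y1.
  by move=> X1 Y1; apply/setP => u; rewrite -(gf u) inE !mem_imset // inE.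
have key : forall (X1 : {set T1}) a, (f @: X1 == [set f a]) = (X1 == [set a]).
  by move=> X1 a; rewrite -imset_set1 (inj_eq (imset_inj fi)).
have ltf : forall a b, lt_of le1 a b = lt_of le2 (f a) (f b).
  by move=> a b; rewrite /lt_of (inj_eq fi) fle.
exists F; split => // A B; rewrite /lek; apply: connect_bij => // {}A {}B.
rewrite /covk /= -!imD; apply/existsP/existsP.
  case=> a /existsP[b H]; exists (f a); apply/existsP; exists (f b).
  by rewrite !key -ltf.
case=> a' /existsP[b' H]; exists (g a'); apply/existsP; exists (g b').
have ltg : lt_of le2 a' b' = lt_of le1 (g a') (g b') by rewrite /lt_of (inj_eq gi) gle.
by move: H; rewrite -{1}(gf a') -{1}(gf b') !key ltg.
Qed.


Lemma card_lt n c : c <= n -> #|[set y : 'I_n | y < c]| = c.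
Proof.
move=> cn.
have -> : [set y : 'I_n | y < c] = [set widen_ord cn y | y in 'I_c].
  apply/setP => y; rewrite inE; apply/idP/imsetP => [yc | [y' _ ->]].
    by exists (Ordinal yc) => //; apply: val_inj.
  exact: (ltn_ord y').
by rewrite card_imset ?card_ord // => a b /(congr1 val) /= e; apply: val_inj.
Qed.

Lemma downset n (D : {set 'I_n}) : (forall x y : 'I_n, x <= y -> y \in D -> x \in D) ->
  forall x : 'I_n, (x \in D) = (x < #|D|).
Proof.
move=> H x; apply/idP/idP => [xD | xlt].
  have sub : [set y : 'I_n | y < x.+1] \subset D.
    by apply/subsetP => y; rewrite inE ltnS => yx; exact: H yx xD.
  by have := subset_leq_card sub; rewrite card_lt.
apply/negP => xD.
have sub : D \subset [set y : 'I_n | y < x].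
  apply/subsetP => y yD; rewrite inE ltnNge; apply/negP => xy.
  by rewrite (H _ _ xy yD) in xD.
have := subset_leq_card sub; rewrite card_lt ?(ltnW (ltn_ord x)) //.
by rewrite leqNgt xlt.
Qed.

Section J.
Variable n : nat.
Definition c0 : 'I_2 := @Ordinal 2 0 isT.
Definition c1 : 'I_2 := @Ordinal 2 1 isT.

Definition row (c : 'I_2) (I : Jtype n) := [set x : 'I_n | (x, c) \in val I].

Lemma Jideal (I : Jtype n) p q : Qle p q -> q \in val I -> p \in val I.
Proof. by move=> pq qI; move/forallP/(_ p)/forallP/(_ q)/implyP/(_ pq)/implyP: (valP I); apply. Qed.

Lemma memJ (I : Jtype n) (x : 'I_n) (c : 'I_2) : ((x, c) \in val I) = (x < #|row c I|).
Proof.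
have -> : ((x, c) \in val I) = (x \in row c I) by rewrite inE.
apply: downset => y z yz; rewrite !inE; apply: Jideal; by rewrite /Qle /= yz leqnn.
Qed.

Lemma row_le (I : Jtype n) : #|row c1 I| <= #|row c0 I|.
Proof.
apply: subset_leq_card; apply/subsetP => x; rewrite !inE; apply: Jideal.
by rewrite /Qle /= leqnn.
Qed.

Lemma row_n (I : Jtype n) c : #|row c I| <= n.
Proof. by have := max_card (mem (row c I)); rewrite card_ord. Qed.

Lemma c2 (c : 'I_2) : c = c0 \/ c = c1.
Proof. by case: c => -[|[|]] // h; [left | right]; apply: val_inj. Qed.

Lemma Jle_rows (I I' : Jtype n) :
  Jle I I' = (#|row c0 I| <= #|row c0 I'|) && (#|row c1 I| <= #|row c1 I'|).
Proof.
apply/idP/andP.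
  move=> sub; split; apply: subset_leq_card; apply/subsetP => x; rewrite !inE;
    exact: (subsetP sub).
case=> h0 h1; apply/subsetP => -[x c]; rewrite !memJ.
by case: (c2 c) => ->; move/leq_trans; apply.
Qed.

Lemma pb_lt (I : Jtype n) : #|row c1 I| < n + 2.
Proof. by have := row_n I c1; lia. Qed.
Lemma pa_lt (I : Jtype n) : #|row c0 I|.+1 < n + 2.
Proof. by have := row_n I c0; lia. Qed.

Definition pb (I : Jtype n) : 'I_(n + 2) := Ordinal (pb_lt I).
Definition pa (I : Jtype n) : 'I_(n + 2) := Ordinal (pa_lt I).

Lemma pab (I : Jtype n) : pb I != pa I.
Proof.
by rewrite -(inj_eq val_inj) /= neq_ltn ltnS row_le.
Qed.

Definition fJ (I : Jtype n) : Ctype (n + 2) 2 := mkpair (pab I).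

Lemma fJ_lohi (I : Jtype n) : lo (fJ I) = #|row c1 I| /\ hi (fJ I) = #|row c0 I|.+1.
Proof.
have h := leq_trans (row_le I) (leqnSn _).
have [-> ->] := mkpair_lohi (pab I); split; [exact/minn_idPl | exact/maxn_idPr].
Qed.

Lemma fJ_le (I I' : Jtype n) : Jle I I' = Cle (fJ I) (fJ I').
Proof.
rewrite Jle_rows Cle2; have [-> ->] := fJ_lohi I; have [-> ->] := fJ_lohi I'.
by rewrite ltnS andbC.
Qed.

Lemma J_iso : poset_iso (@Jle n) (@Cle (n + 2) 2).
Proof.
exists fJ; split; last exact: fJ_le.
apply: inj_surj_bij.
  move=> I I' e.
  have h1 : Jle I I' by rewrite fJ_le e Cle2 !leqnn.
  have h2 : Jle I' I by rewrite fJ_le e Cle2 !leqnn.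
  by apply: val_inj; apply/eqP; rewrite eqEsubset; apply/andP; split.
move=> P; have lh := lo_lt_hi P; have hm := hi_lt P.
pose I0 := [set q : 'I_n * 'I_2 | q.1 < (if val q.2 == 0 then (hi P).-1 else lo P)].
have idl : is_ideal I0.
  apply/forallP => -[x c]; apply/forallP => -[y d]; apply/implyP => /andP[/= h1 h2].
  apply/implyP; rewrite !inE /=.
  case: (c2 c) => ec; case: (c2 d) => ed; rewrite ec ed /= in h2 *; lia.
pose I : Jtype n := exist _ I0 idl.
have r0 : row c0 I = [set x : 'I_n | x < (hi P).-1] by apply/setP => x; rewrite !inE.
have r1 : row c1 I = [set x : 'I_n | x < lo P] by apply/setP => x; rewrite !inE.
exists I; have [e1 e2] := fJ_lohi I; apply: pair_ext.
  by rewrite e1 r1 card_lt //; lia.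
by rewrite e2 r0 card_lt; lia.
Qed.

End J.


Unset Implicit Arguments.

Theorem proposition4p1 (n k : nat) :
  (k <= (n + 2)./2)%N ->
  poset_iso (@lek _ (@Jle n) k) (@lek _ (@Cle (n + 2) 2) k) /\
  poset_iso (@lek _ (@Cle (n + 2) 2) k) (@Cle (n + 2) (2 * k)).
Proof.
move=> _; split; [exact: transfer (J_iso n) | exact: part2].
Qed.
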